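(* Consider the setting described in the context and suppose the stepsizes satisfy conditions (A), (B) and (C). Let $u^\star=(x^\star,y^\star)$ satisfy $0\in F(x^\star)+A^Ty^\star$ and $0\in G(y^\star)-Ax^\star$. Then there is a constant $C_L$ (possibly negative) such that the PDHG iterates satisfy $\|u_{k+1}-u^\star\|_{M_k}^2\ge C_L$ for all $k$.
   Context: Let $A\in\mathbb{R}^{M\times N}$, let $f$ and $g$ be convex functions on $\mathbb{R}^N$ and $\mathbb{R}^M$, and let $X\subset\mathbb{R}^N$, $Y\subset\mathbb{R}^M$ be convex sets; consider the saddle-point problem $\min_{x\in X}\max_{y\in Y} f(x)+y^TAx-g(y)$. Let $\chi_C$ denote the characteristic function of a set $C$ ($0$ on $C$, $+\infty$ off $C$), and let $F=\partial(f+\chi_X)$, $G=\partial(g+\chi_Y)$. It is assumed that the problem is feasible (such $u^\star$ exists) and that the minimizations below have solutions. The PDHG method with stepsizes $\tau_k,\sigma_k>0$ starts from $x_0,y_0$ and iterates $x_{k+1}=\arg\min_{x\in X} f(x)+\frac{1}{2\tau_k}\|x-(x_k-\tau_kA^Ty_k)\|^2$, $y_{k+1}=\arg\min_{y\in Y} g(y)+\frac{1}{2\sigma_k}\|y-(y_k+\sigma_kA(2x_{k+1}-x_k))\|^2$. Write $u_k=(x_k,y_k)$, $M_k=\begin{pmatrix}\tau_k^{-1}I & -A^T\\ -A & \sigma_k^{-1}I\end{pmatrix}$, $H_k=\begin{pmatrix}\tau_k^{-1}I & 0\\ 0 & \sigma_k^{-1}I\end{pmatrix}$, and for a symmetric (possibly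 indefinite) matrix $M$, $\|u\|_M^2:=u^TMu$. Let $\phi_k=\max\{(\tau_k-\tau_{k+1})/\tau_k,\ (\sigma_k-\sigma_{k+1})/\sigma_k,\ 0\}$. Conditions: (A) the sequences $\{\tau_k\}$ and $\{\sigma_k\}$ are bounded; (B) $\sum_{k\ge0}\phi_k<C_\phi<\infty$ for some constant $C_\phi$; (C) either (C1) there is a constant $L$ with $\tau_k\sigma_k<L<\rho(A^TA)^{-1}$ for all $k>0$ ($\rho$ = spectral radius), or (C2) either $X$ or $Y$ is bounded and there is $c\in(0,1)$ with $\|u_{k+1}-u_k\|_{M_k}^2\ge c\|u_{k+1}-u_k\|_{H_k}^2$ for all $k>0$. *)

(* Defs.v *)
From HB Require Import structures.
From mathcomp Require Import all_boot all_order all_algebra.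
From mathcomp Require Import boolp classical_sets reals.
Set Implicit Arguments. Unset Strict Implicit. Unset Printing Implicit Defensive.
Import Order.TTheory GRing.Theory Num.Theory.
Local Open Scope ring_scope.
Local Open Scope classical_set_scope.

Section PDHGDefs.
Variable R : realType.

Definition sqnorm (n : nat) (v : 'cV[R]_n) : R := \sum_i (v i 0) ^+ 2.

Definition qform (n : nat) (Mat : 'M[R]_n) (u : 'cV[R]_n) : R :=
  ((u^T *m Mat *m u) 0 0).

Definition convex_set (n : nat) (X : set 'cV[R]_n) : Prop :=
  forall x y (t : R), X x -> X y -> 0 <= t -> t <= 1 ->
    X (t *: x + (1 - t) *: y).

Definition convex_fun (n : nat) (f : 'cV[R]_n -> R) : Prop :=
  forall x y (t : R), 0 <= t -> t <= 1 ->
    f (t *: x + (1 - t) *: y) <= t * f x + (1 - t) * f y.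

Definition bounded_set (n : nat) (X : set 'cV[R]_n) : Prop :=
  exists B : R, forall x, X x -> sqnorm x <= B.

(* p \in \partial (f + chi_X)(x) : x \in X and the subgradient inequality on X
   (outside X, f + chi_X = +oo, so the inequality is trivial there). *)
Definition subdiff_ind (n : nat) (f : 'cV[R]_n -> R) (X : set 'cV[R]_n)
    (x p : 'cV[R]_n) : Prop :=
  X x /\ forall z, X z -> f x + ((p^T *m (z - x)) 0 0) <= f z.

Definition is_prox_min (n : nat) (h : 'cV[R]_n -> R) (X : set 'cV[R]_n)
    (t : R) (v x' : 'cV[R]_n) : Prop :=
  X x' /\ forall x, X x ->
    h x' + (2 * t)^-1 * sqnorm (x' - v) <= h x + (2 * t)^-1 * sqnorm (x - v).

Definition specrad (n : nat) (Mat : 'M[R]_n) : R :=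
  sup [set r : R | exists a : R, eigenvalue Mat a /\ r = `|a|].

Definition Mk (m n : nat) (A : 'M[R]_(m, n)) (tau sigma : R) : 'M[R]_(n + m) :=
  block_mx (tau^-1%:M) (- A^T) (- A) (sigma^-1%:M).

Definition Hk (m n : nat) (tau sigma : R) : 'M[R]_(n + m) :=
  block_mx (tau^-1%:M) 0 0 (sigma^-1%:M).

Definition phik (tau sigma : nat -> R) (k : nat) : R :=
  Num.max (Num.max ((tau k - tau k.+1) / tau k) ((sigma k - sigma k.+1) / sigma k)) 0.

End PDHGDefs.

(* Main.v *)
Require Import Defs.
From HB Require Import structures.
From mathcomp Require Import all_boot all_order all_algebra.
From mathcomp Require Import boolp classical_sets reals.
From mathcomp Require Import ring lra.
Set Implicit Arguments. Unset Strict Implicit. Unset Printing Implicit Defensive.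
Import Order.TTheory GRing.Theory Num.Theory.
Local Open Scope ring_scope.
Local Open Scope classical_set_scope.

Section L.
Variable R : realType.

Definition dot (n : nat) (u v : 'cV[R]_n) : R := (u^T *m v) 0 0.

Lemma dotE n (u v : 'cV[R]_n) : dot u v = (\sum_i u i 0 * v i 0)%R.
Proof. by rewrite /dot mxE; apply: eq_bigr => i _; rewrite mxE. Qed.

Lemma sqnormE n (u : 'cV[R]_n) : sqnorm u = dot u u.
Proof. by rewrite dotE /sqnorm; apply: eq_bigr => i _; rewrite expr2. Qed.

Lemma dotC n (u v : 'cV[R]_n) : dot u v = dot v u.
Proof. by rewrite !dotE; apply: eq_bigr => i _; rewrite mulrC. Qed.

Lemma dotDl n (u v w : 'cV[R]_n) : dot (u + v) w = dot u w + dot v w.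
Proof. by rewrite !dotE -big_split; apply: eq_bigr => i _; rewrite mxE mulrDl. Qed.

Lemma dotDr n (u v w : 'cV[R]_n) : dot w (u + v) = dot w u + dot w v.
Proof. by rewrite dotC dotDl !(dotC w). Qed.

Lemma dotZl n a (u w : 'cV[R]_n) : dot (a *: u) w = a * dot u w.
Proof. rewrite !dotE mulr_sumr; apply: eq_bigr => i _; rewrite mxE mulrA //. Qed.

Lemma dotZr n a (u w : 'cV[R]_n) : dot w (a *: u) = a * dot w u.
Proof. by rewrite dotC dotZl dotC. Qed.

Lemma dotNl n (u w : 'cV[R]_n) : dot (- u) w = - dot u w.
Proof. by rewrite -scaleN1r dotZl mulN1r. Qed.

Lemma dotNr n (u w : 'cV[R]_n) : dot w (- u) = - dot w u.
Proof. by rewrite dotC dotNl dotC. Qed.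

Lemma dotBl n (u v w : 'cV[R]_n) : dot (u - v) w = dot u w - dot v w.
Proof. by rewrite dotDl dotNl. Qed.

Lemma dotBr n (u v w : 'cV[R]_n) : dot w (u - v) = dot w u - dot w v.
Proof. by rewrite dotDr dotNr. Qed.

Lemma dot_ge0 n (u : 'cV[R]_n) : 0 <= dot u u.
Proof. by rewrite dotE sumr_ge0 // => i _; rewrite -expr2 sqr_ge0. Qed.

Lemma coord_le n (u : 'cV[R]_n) i : u i 0 ^+ 2 <= dot u u.
Proof.
rewrite dotE (bigD1 i) //= -expr2 lerDl; apply: sumr_ge0 => j _; by rewrite -expr2 sqr_ge0.
Qed.

Lemma dot_gt0 n (u : 'cV[R]_n) : u != 0 -> 0 < dot u u.
Proof.
move=> nz; have [i Hi] : exists i, u i 0 != 0.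
  apply/not_existsP => H; move/eqP: nz; apply; apply/matrixP => i j.
  rewrite (ord1 j) mxE; apply/eqP; apply/negP => /negP; exact: H.
by apply: lt_le_trans (coord_le u i); rewrite exprn_even_gt0 // Hi orbT.
Qed.

Lemma dot_mul n p (N : 'M[R]_(p, n)) u v : dot u (N *m v) = dot (N^T *m u) v.
Proof. by rewrite /dot trmx_mul trmxK mulmxA. Qed.

Lemma normM n p (M : 'M[R]_(p, n)) z :
  dot (M *m z) (M *m z) = dot z ((M^T *m M) *m z).
Proof. by rewrite dot_mul dotC mulmxA. Qed.

Definition absum n (M : 'M[R]_n) : R := \sum_i \sum_j `|M i j|.

Lemma absum_ge0 n (M : 'M[R]_n) : 0 <= absum M.
Proof. by apply: sumr_ge0 => i _; apply: sumr_ge0 => j _. Qed.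

Lemma qbound n (M : 'M[R]_n) u : dot u (M *m u) <= absum M * dot u u.
Proof.
have -> : dot u (M *m u) = \sum_i \sum_j u i 0 * M i j * u j 0.
  rewrite dotE; apply: eq_bigr => i _; rewrite mxE mulr_sumr.
  by apply: eq_bigr => j _; rewrite mulrA.
rewrite /absum mulr_suml; apply: ler_sum => i _; rewrite mulr_suml.
apply: ler_sum => j _.
have hi := coord_le u i; have hj := coord_le u j.
set x := u i 0 in hi *; set y := u j 0 in hj *; set m := M i j; set s := dot u u.
have h1 : x * m * y <= `|m| * (`|x| * `|y|).
  by apply: le_trans (ler_norm _) _; rewrite !normrM mulrAC mulrC.
apply: le_trans h1 _; apply: ler_wpM2l => //.
rewrite -(real_normK (num_real x)) in hi; rewrite -(real_normK (num_real y)) in hj.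
move: hi hj; move: `|x| `|y| => a b hi hj.
have : 0 <= (a - b) ^+ 2 by apply: sqr_ge0.
rewrite sqrrB => h; rewrite /s; lra.
Qed.


Lemma dot0l n (w : 'cV[R]_n) : dot 0 w = 0.
Proof. by rewrite dotE big1 // => i _; rewrite mxE mul0r. Qed.

Lemma sym_dot n (T : 'M[R]_n) u v : T^T = T -> dot u (T *m v) = dot v (T *m u).
Proof. by move=> sT; rewrite dot_mul sT dotC. Qed.

Lemma eig_bound n (S : 'M[R]_n) a : S^T = S -> eigenvalue S a ->
  `|a| <= absum S + absum (- S).
Proof.
move=> sS /eigenvalueP [v hv vnz].
set w := v^T.
have wnz : w != 0 by apply: contra vnz => /eqP h; rewrite -[v]trmxK -/w h trmx0.
have hw : S *m w = a *: w by rewrite /w -{1}sS -trmx_mul hv linearZ.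
have pw := dot_gt0 wnz.
have h1 : a * dot w w <= absum S * dot w w by rewrite -[a * _]dotZr -hw qbound.
have h2 : - a * dot w w <= absum (- S) * dot w w.
  by rewrite -[- a * _]dotZr scaleNr -hw -mulNmx qbound.
rewrite ler_pM2r // in h1; rewrite ler_pM2r // in h2.
have := absum_ge0 S; have := absum_ge0 (- S).
by case: (ler0P a) => _; lra.
Qed.


Lemma psd_cs n (T : 'M[R]_n) v : T^T = T -> (forall u, 0 <= dot u (T *m u)) ->
  dot (T *m v) (T *m v) <= (absum T + 1) * dot v (T *m v).
Proof.
move=> sT psd.
have hs := sym_dot v (T *m v) sT.
set w := T *m v in hs *; set G := absum T + 1.
have G0 : 0 < G by have := absum_ge0 T; rewrite /G; lra.
set b := dot w w; set a := dot v w.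
have b0 : 0 <= b := dot_ge0 w.
have c_le : dot w (T *m w) <= G * b.
  by apply: le_trans (qbound T w) _; apply: ler_wpM2r => //; rewrite /G lerDl.
set g := G^-1.
have gG : g * G = 1 by rewrite mulVf // gt_eqF.
have g0 : 0 < g by rewrite invr_gt0.
have := psd (v + (- g) *: w).
rewrite mulmxDr -scalemxAr dotDl !dotDr !dotZl !dotZr hs -/a -/b.
set c := dot w (T *m w) in c_le *.
have h3 : g * c <= b.
  by rewrite -[b]mul1r -gG -mulrA; apply: ler_wpM2l => //; apply: ltW.
have h4 : g * (g * c) <= g * b by apply: ler_wpM2l => //; apply: ltW.
move=> h5.
have h6 : g * b <= a by lra.
have : G * (g * b) <= G * a by apply: ler_wpM2l => //; apply: ltW.
by rewrite mulrA (mulrC G) gG mul1r.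
Qed.


Lemma rayleigh n (S : 'M[R]_n) v : S^T = S ->
  dot v (S *m v) <= specrad S * dot v v.
Proof.
move=> sS.
have [->|vnz] := eqVneq v 0; first by rewrite !dot0l mulr0.
pose Q := [set q : R | exists2 u : 'cV[R]_n, u != 0 & q = dot u (S *m u) / dot u u].
have Qne : Q !=set0 by exists (dot v (S *m v) / dot v v); exists v.
have Qub : ubound Q (absum S).
  move=> q [u unz ->]; rewrite ler_pdivrMr ?dot_gt0 //; exact: qbound.
have hsup : has_sup Q by split => //; exists (absum S).
set mu := sup Q.
have hmu : forall u, dot u (S *m u) <= mu * dot u u.
  move=> u; have [->|unz] := eqVneq u 0; first by rewrite !dot0l mulr0.
  rewrite -ler_pdivrMr ?dot_gt0 //; apply: sup_upper_bound => //; by exists u.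
have eig : eigenvalue S mu.
  case/boolP: (eigenvalue S mu) => // neig; exfalso.
  have Nu : (S - mu%:M) \in unitmx.
    by rewrite -row_free_unit -kermx_eq0; apply/negPn.
  set N := S - mu%:M in Nu.
  set T := - N.
  have sT : T^T = T by rewrite /T /N linearN /= linearB /= sS tr_scalar_mx.
  have TE : forall u : 'cV[R]_n, T *m u = mu *: u - S *m u.
    by move=> u; rewrite /T /N mulNmx mulmxBl mul_scalar_mx opprB.
  have psd : forall u : 'cV[R]_n, 0 <= dot u (T *m u).
    by move=> u; rewrite TE dotBr dotZr subr_ge0.
  set G := absum T + 1.
  set K := absum ((invmx N)^T *m invmx N) + 1.
  have G0 : 0 < G by have := absum_ge0 T; rewrite /G; lra.
  have K0 : 0 < K by have := absum_ge0 ((invmx N)^T *m invmx N); rewrite /K; lra.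
  have key : forall u : 'cV[R]_n, dot u u <= K * dot (T *m u) (T *m u).
    move=> u.
    have -> : dot u u = dot (invmx N *m (N *m u)) (invmx N *m (N *m u)).
      by rewrite mulKmx.
    rewrite (normM (invmx N)).
    have -> : N *m u = - (T *m u) by rewrite /T mulNmx opprK.
    rewrite mulmxN dotNl dotNr opprK.
    apply: le_trans (qbound _ _) _; apply: ler_wpM2r; first exact: dot_ge0.
    by rewrite /K lerDl.
  pose eps := (K * G)^-1.
  have eps0 : 0 < eps by rewrite invr_gt0 mulr_gt0.
  have : mu <= mu - eps.
    apply: ge_sup => // q [u unz ->].
    have pu := dot_gt0 unz.
    rewrite ler_pdivrMr //.
    have h1 := key u.
    have h2 := psd_cs u sT psd.
    have h3 : dot u u <= (K * G) * dot u (T *m u).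
      by rewrite -mulrA; apply: le_trans h1 _; apply: ler_wpM2l (ltW K0) _ _ h2.
    have h4 : eps * dot u u <= dot u (T *m u).
      have : eps * dot u u <= eps * ((K * G) * dot u (T *m u)).
        by apply: ler_wpM2l (ltW eps0) _ _ h3.
      by rewrite mulrA mulVf ?mul1r // gt_eqF // mulr_gt0.
    move: h4; rewrite TE dotBr dotZr mulrBl; lra.
  lra.
have : `|mu| <= specrad S.
  apply: sup_upper_bound; last by exists mu.
  split; first by exists `|mu|, mu.
  exists (absum S + absum (- S)) => r [a [ea ->]]; exact: eig_bound.
move=> h; apply: le_trans (hmu v) _; apply: ler_wpM2r; first exact: dot_ge0.
exact: le_trans (ler_norm mu) h.
Qed.


Lemma e00D (P Q : 'M[R]_1) : (P + Q) 0 0 = P 0 0 + Q 0 0. Proof. by rewrite mxE. Qed.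
Lemma e00N (P : 'M[R]_1) : (- P) 0 0 = - P 0 0. Proof. by rewrite mxE. Qed.
Lemma e00Z c (P : 'M[R]_1) : (c *: P) 0 0 = c * P 0 0. Proof. by rewrite mxE. Qed.

Lemma qform_Mk m n (A : 'M[R]_(m, n)) t s a b :
  qform (Mk A t s) (col_mx a b) =
  t^-1 * dot a a + s^-1 * dot b b - 2 * dot b (A *m a).
Proof.
rewrite /qform /Mk tr_col_mx mul_row_block mul_row_col.
rewrite !mulmxDl !mul_mx_scalar !mulmxN -!scalemxAl.
rewrite -trmx_mul !mulNmx !e00D !e00N !e00Z -mulmxA.
rewrite -/(dot a a) -/(dot b b) -/(dot (A *m a) b) -/(dot b (A *m a)) dotC.
ring.
Qed.


Lemma qform_lbx m n (A : 'M[R]_(m, n)) t s a b : 0 < s ->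
  t^-1 * dot a a - s * dot (A *m a) (A *m a) <= qform (Mk A t s) (col_mx a b).
Proof.
move=> s0; rewrite qform_Mk.
have := dot_ge0 (b - s *: (A *m a)).
rewrite !dotBl !dotBr !dotZl !dotZr (dotC (A *m a) b).
set r := dot b b; set x := dot b (A *m a); set q := dot (A *m a) (A *m a).
move=> hE.
have si0 : 0 < s^-1 by rewrite invr_gt0.
have := mulr_ge0 (ltW si0) hE.
have -> : s^-1 * (r - s * x - (s * x - s * (s * q))) = s^-1 * r - 2 * x + s * q.
  by field; rewrite gt_eqF.
lra.
Qed.

Lemma qform_lby m n (A : 'M[R]_(m, n)) t s a b : 0 < t ->
  s^-1 * dot b b - t * dot (A^T *m b) (A^T *m b) <= qform (Mk A t s) (col_mx a b).
Proof.
move=> t0; rewrite qform_Mk.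
have := dot_ge0 (a - t *: (A^T *m b)).
have hx : dot a (A^T *m b) = dot b (A *m a) by rewrite dot_mul trmxK dotC.
rewrite !dotBl !dotBr !dotZl !dotZr (dotC (A^T *m b) a) hx.
set r := dot a a; set x := dot b (A *m a); set q := dot (A^T *m b) (A^T *m b).
move=> hE.
have si0 : 0 < t^-1 by rewrite invr_gt0.
have := mulr_ge0 (ltW si0) hE.
have -> : t^-1 * (r - t * x - (t * x - t * (t * q))) = t^-1 * r - 2 * x + t * q.
  by field; rewrite gt_eqF.
lra.
Qed.

Lemma dot_sub_le n (u v : 'cV[R]_n) :
  dot (u - v) (u - v) <= 2 * dot u u + 2 * dot v v.
Proof.
have := dot_ge0 (u + v).
rewrite !dotBl !dotBr !dotDl !dotDr (dotC v u); lra.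
Qed.

End L.

Unset Implicit Arguments.

Theorem mainTheorem4 (R : realType) (m n : nat) (A : 'M[R]_(m, n))
    (f : 'cV[R]_n -> R) (g : 'cV[R]_m -> R)
    (X : set 'cV[R]_n) (Y : set 'cV[R]_m)
    (tau sigma : nat -> R) (x : nat -> 'cV[R]_n) (y : nat -> 'cV[R]_m)
    (xs : 'cV[R]_n) (ys : 'cV[R]_m) :
  convex_fun f -> convex_fun g -> convex_set X -> convex_set Y ->
  (forall k, 0 < tau k) -> (forall k, 0 < sigma k) ->
  (* PDHG iterations (any choice of minimizers) *)
  (forall k, is_prox_min f X (tau k) (x k - tau k *: (A^T *m y k)) (x k.+1)) ->
  (forall k, is_prox_min g Y (sigma k)
               (y k + sigma k *: (A *m (2%:R *: x k.+1 - x k))) (y k.+1)) ->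
  (* u* : 0 \in F(x* ) + A^T y*  and  0 \in G(y* ) - A x* *)
  subdiff_ind f X xs (- (A^T *m ys)) ->
  subdiff_ind g Y ys (A *m xs) ->
  (* (A) *)
  (exists B : R, forall k, tau k <= B /\ sigma k <= B) ->
  (* (B) *)
  (exists Cphi : R, forall K, \sum_(k < K) phik tau sigma k < Cphi) ->
  (* (C) *)
  ((exists L : R, (forall k, (0 < k)%N -> tau k * sigma k < L) /\
                  L * specrad (A^T *m A) < 1)
   \/
   ((bounded_set X \/ bounded_set Y) /\
    exists c : R, 0 < c /\ c < 1 /\
      forall k, (0 < k)%N ->
        qform (Mk A (tau k) (sigma k)) (col_mx (x k.+1 - x k) (y k.+1 - y k))
        >= c * qform (Hk m n (tau k) (sigma k))
                     (col_mx (x k.+1 - x k) (y k.+1 - y k)))) ->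
  exists CL : R, forall k,
    qform (Mk A (tau k) (sigma k)) (col_mx (x k.+1 - xs) (y k.+1 - ys)) >= CL.
Proof.
move=> _ _ _ _ tau0 sig0 hx hy hxs hys [B hB] _ hC.
case: hC => [[L [hL hLr]] | [hXY _]].
- set q0 := qform (Mk A (tau 0%N) (sigma 0%N)) (col_mx (x 1%N - xs) (y 1%N - ys)).
  exists (Num.min 0 q0) => k.
  case: k => [|k]; first by rewrite ge_min lexx orbT.
  apply: le_trans (qform_lbx _ _ _ _ (sig0 k.+1)).
  rewrite ge_min; apply/orP; left.
  set a := x k.+2 - xs.
  set t := tau k.+1; set s := sigma k.+1.
  have t0 : 0 < t := tau0 k.+1.
  have s0 : 0 < s := sig0 k.+1.
  have hts : t * s < L := hL k.+1 (ltn0Sn k).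
  have sym : (A^T *m A)^T = A^T *m A by rewrite trmx_mul trmxK.
  have hr := rayleigh a sym.
  rewrite -normM in hr.
  set q := dot (A *m a) (A *m a) in hr *; set p := dot a a in hr *.
  set rho := specrad (A^T *m A) in hr hLr.
  have p0 : 0 <= p := dot_ge0 a.
  have h1 : t * s * q <= t * s * (rho * p).
    by apply: ler_wpM2l (ltW (mulr_gt0 t0 s0)) _ _ hr.
  have h2 : t * s * (rho * p) <= p.
    case: (lerP 0 rho) => hrho.
      have h3 : t * s * (rho * p) <= L * (rho * p).
        by apply: ler_wpM2r (ltW hts); apply: mulr_ge0.
      have h4 : L * (rho * p) <= p.
        rewrite mulrA -[leRHS]mul1r; apply: ler_wpM2r => //; exact: ltW.
      exact: le_trans h3 h4.
    have : rho * p <= 0 by apply: mulr_le0_ge0 => //; apply: ltW.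
    move=> h; apply: le_trans (_ : 0 <= p) => //.
    by apply: mulr_ge0_le0 => //; apply: ltW; apply: mulr_gt0.
  have h5 : t * s * q <= p := le_trans h1 h2.
  have -> : t^-1 * p - s * q = t^-1 * (p - t * s * q).
    by field; rewrite gt_eqF.
  apply: mulr_ge0; first by rewrite invr_ge0 ltW.
  by rewrite subr_ge0.
- case: hXY => [[BX hBX] | [BY hBY]].
  + set G := absum (A^T *m A).
    exists (- (B * (G * (4 * BX)))) => k.
    apply: le_trans (qform_lbx _ _ _ _ (sig0 k)).
    set a := x k.+1 - xs.
    have ha : dot a a <= 4 * BX.
      have h1 := hBX _ (hx k).1; have h2 := hBX _ hxs.1.
      rewrite !sqnormE in h1 h2; have := dot_sub_le (x k.+1) xs; lra.
    have hq : dot (A *m a) (A *m a) <= G * (4 * BX).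
      rewrite normM; apply: le_trans (qbound _ _) _.
      by apply: ler_wpM2l => //; exact: absum_ge0.
    have q0 := dot_ge0 (A *m a).
    have p0 := dot_ge0 a.
    have tp : 0 <= (tau k)^-1 * dot a a by apply: mulr_ge0 => //; rewrite invr_ge0 ltW.
    have [_ sB] := hB k.
    have s0 := sig0 k.
    have h1 : sigma k * dot (A *m a) (A *m a) <= B * dot (A *m a) (A *m a).
      by apply: ler_wpM2r.
    have h2 : B * dot (A *m a) (A *m a) <= B * (G * (4 * BX)).
      by apply: ler_wpM2l => //; apply: le_trans sB; apply: ltW.
    lra.
  + set G := absum (A^T^T *m A^T).
    exists (- (B * (G * (4 * BY)))) => k.
    apply: le_trans (qform_lby _ _ _ _ (tau0 k)).
    set b := y k.+1 - ys.
    have hb : dot b b <= 4 * BY.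
      have h1 := hBY _ (hy k).1; have h2 := hBY _ hys.1.
      rewrite !sqnormE in h1 h2; have := dot_sub_le (y k.+1) ys; lra.
    have hq : dot (A^T *m b) (A^T *m b) <= G * (4 * BY).
      rewrite normM; apply: le_trans (qbound _ _) _.
      by apply: ler_wpM2l => //; exact: absum_ge0.
    have q0 := dot_ge0 (A^T *m b).
    have p0 := dot_ge0 b.
    have tp : 0 <= (sigma k)^-1 * dot b b by apply: mulr_ge0 => //; rewrite invr_ge0 ltW.
    have [tB _] := hB k.
    have t0 := tau0 k.
    have h1 : tau k * dot (A^T *m b) (A^T *m b) <= B * dot (A^T *m b) (A^T *m b).
      by apply: ler_wpM2r.
    have h2 : B * dot (A^T *m b) (A^T *m b) <= B * (G * (4 * BY)).
      by apply: ler_wpM2l => //; apply: le_trans tB; apply: ltW.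
    lra.
Qed.
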